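(* A Borel probability measure $\pi$ on $[0,1]$ is a minimax prior if and only if $\int_{[0,1]}\theta\,\pi(d\theta)=1/2$ and $\int_{[0,1]}\theta^2\,\pi(d\theta)=2/5$.
   Context: Bernoulli model: for $\theta\in[0,1]$, $p_\theta(x)=\theta^x(1-\theta)^{1-x}$, $x\in\{0,1\}$. One observes $x\sim p_\theta$ and predicts an independent future $y\sim p_\theta$. A nonrandomized decision is a pair $\delta=(\delta_0,\delta_1)\in\mathcal D=[0,1]^2$, used as the predictive distribution $p_\delta(y\mid x)=\delta_x^{\,y}(1-\delta_x)^{1-y}$. The Kullback–Leibler risk is $R_\delta(\theta)=-S(\theta)+\theta^2\log\frac1{\delta_1}+\theta(1-\theta)\log\frac1{1-\delta_1}+\theta(1-\theta)\log\frac1{\delta_0}+(1-\theta)^2\log\frac1{1-\delta_0}\in[0,+\infty]$, where $S(\theta)=-\theta\log\theta-(1-\theta)\log(1-\theta)$ is the binary entropy, with conventions $0\log 0=0$, $\log(1/0)=+\infty$, $0\cdot(+\infty)=0$. A decision is minimax if it minimizes $\sup_{\theta\in[0,1]}R_\delta(\theta)$ over $\mathcal D$. A prior is a Borel probability measure $\pi$ on $[0,1]$; a decision $\delta$ is Bayes with respect to $\pi$ if it minimizes $\int_{[0,1]}R_\delta(\theta)\,\pi(d\theta)$ over $\mathcal D$. A prior $\pi$ is called a minimax prior if a Bayes decision with respect to $\pi$ is minimax. *)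

(* Defs.v *)
From HB Require Import structures.
From mathcomp Require Import all_boot all_order all_algebra.
From mathcomp Require Import all_classical all_reals all_analysis.
Set Implicit Arguments. Unset Strict Implicit. Unset Printing Implicit Defensive.
Import Order.TTheory GRing.Theory Num.Theory.
Local Open Scope classical_set_scope.
Local Open Scope ring_scope.

Section Bernoulli.
Variable R : realType.

Definition xlogx (x : R) : R := if x == 0 then 0 else x * ln x.

Definition entropy (t : R) : R := - xlogx t - xlogx (1 - t).

Definition nlog (d : R) : \bar R := if d == 0 then +oo%E else (- ln d)%:E.

Definition wterm (c d : R) : \bar R := if c == 0 then 0%E else (c%:E * nlog d)%E.

Definition decisions : set (R * R) := [set d | 0 <= d.1 <= 1 /\ 0 <= d.2 <= 1].

(* Kullback-Leibler risk R_delta(theta) *)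
Definition risk (d : R * R) (t : R) : \bar R :=
  ((- entropy t)%:E
   + wterm (t ^+ 2) d.2 + wterm (t * (1 - t)) (1 - d.2)
   + wterm (t * (1 - t)) d.1 + wterm ((1 - t) ^+ 2) (1 - d.1))%E.

Definition max_risk (d : R * R) : \bar R := ereal_sup (risk d @` `[0%R, 1%R]%classic).

Definition minimax (d : R * R) : Prop :=
  decisions d /\ forall d', decisions d' -> (max_risk d <= max_risk d')%E.

Definition bayes_risk (P : probability R R) (d : R * R) : \bar R :=
  (\int[P]_(t in `[0%R, 1%R]) risk d t)%E.

Definition bayes (P : probability R R) (d : R * R) : Prop :=
  decisions d /\ forall d', decisions d' -> (bayes_risk P d <= bayes_risk P d')%E.

Definition prior (P : probability R R) : Prop := P `[0%R, 1%R]%classic = 1%E.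

Definition minimax_prior (P : probability R R) : Prop :=
  exists d, bayes P d /\ minimax d.

End Bernoulli.

(* Main.v *)
Require Import Defs.
From HB Require Import structures.
From mathcomp Require Import all_boot all_order all_algebra.
From mathcomp Require Import all_classical all_reals all_analysis.
From mathcomp Require Import measurable_realfun ring lra.
Import Order.TTheory GRing.Theory Num.Theory.
Local Open Scope classical_set_scope.
Local Open Scope ring_scope.

Lemma ln_le_sub1 {R : realType} (x : R) : 0 < x -> ln x <= x - 1.
Proof.
move=> x0; have e : 1 + (x - 1) = x by ring.
have := @le_ln1Dx R (x - 1); rewrite e; apply; lra.
Qed.

Lemma ln_lt_sub1 {R : realType} (x : R) : 0 < x -> x != 1 -> ln x < x - 1.
Proof.
move=> x0 x1; have h := @expR_gt1Dx R (ln x); rewrite lnK ?posrE // in h.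
have : ln x != 0 by rewrite ln_eq0.
move/h; lra.
Qed.

Definition p2 {R : realType} : {poly R} :=
  ('X - 1) - 2^-1 *: ('X - 1)^+2 + 3^-1 *: ('X - 1)^+3.
Definition p1 {R : realType} : {poly R} :=
  - (1 - 'X) - 2^-1 *: (1 - 'X)^+2 - 3^-1 *: (1 - 'X)^+3.

Lemma d2 {R : realType} (x : R) (x0 : 0 < x) :
  is_derive x 1 (horner p2 - (@ln R)) ((x-1)^+3 / x).
Proof.
apply: is_derive_eq (is_deriveB (is_derive_poly p2 x) (is_derive1_ln x0)) _.
rewrite [X in X - _](_ : _ = p2^`().[x]); last first.
  by have := derivE (@p2 R) => /(congr1 (fun f => f x)) ->.
rewrite /p2 !poly.derivE !hornerE /=.
field; lra.
Qed.

Lemma d1 {R : realType} (x : R) (x0 : 0 < x) :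
  is_derive x 1 (horner p1 - (@ln R)) (- (1 - x)^+3 / x).
Proof.
apply: is_derive_eq (is_deriveB (is_derive_poly p1 x) (is_derive1_ln x0)) _.
rewrite [X in X - _](_ : _ = p1^`().[x]); last first.
  by have := derivE (@p1 R) => /(congr1 (fun f => f x)) ->.
rewrite /p1 !poly.derivE !hornerE /=.
field; lra.
Qed.

Lemma e2 {R : realType} (y : R) : p2.[y] = (y - 1) - (y-1)^+2/2 + (y-1)^+3/3.
Proof. rewrite /p2 !(hornerD, hornerN, hornerZ, horner_exp, hornerX, hornerC). by field. Qed.

Lemma e1 {R : realType} (y : R) : p1.[y] = - (1 - y) - (1-y)^+2/2 - (1-y)^+3/3.
Proof. rewrite /p1 !(hornerD, hornerN, hornerZ, horner_exp, hornerX, hornerC). by field. Qed.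

Lemma lnP2 {R : realType} (y : R) : 1 <= y ->
  ln y <= (y - 1) - (y-1)^+2/2 + (y-1)^+3/3.
Proof.
move=> y1.
have := @MVT_segment R (horner p2 - (@ln R)) (fun x => (x-1)^+3/x) 1 y y1.
case.
- by move=> x; rewrite in_itv /= => /andP[x1 _]; apply: d2; lra.
- apply: derivable_within_continuous => x; rewrite in_itv /= => /andP[x1 _].
  by apply: ex_derive; apply: d2; lra.
move=> c; rewrite in_itv /= => /andP[c1 cy] /= eq.
have : 0 <= (c - 1) ^+ 3 / c * (y - 1).
  by apply: mulr_ge0; [apply: divr_ge0; [apply: exprn_ge0; lra | lra] | lra].
rewrite -eq !fctE !e2 ln1; lra.
Qed.

Lemma lnP1 {R : realType} (y : R) : 0 < y -> y <= 1 ->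
  ln y <= - (1 - y) - (1-y)^+2/2 - (1-y)^+3/3.
Proof.
move=> y0 y1.
have := @MVT_segment R (horner p1 - (@ln R)) (fun x => - (1-x)^+3/x) y 1 y1.
case.
- by move=> x; rewrite in_itv /= => /andP[x1 _]; apply: d1; lra.
- apply: derivable_within_continuous => x; rewrite in_itv /= => /andP[x1 _].
  by apply: ex_derive; apply: d1; lra.
move=> c; rewrite in_itv /= => /andP[c1 cy] /= eq.
have : (1 - c) ^+ 3 / c * (1 - y) >= 0.
  by apply: mulr_ge0; [apply: divr_ge0; [apply: exprn_ge0; lra | lra] | lra].
have -> : (1 - c) ^+ 3 / c * (1 - y) = - (- (1 - c) ^+ 3 / c * (1 - y)) by rewrite !mulNr opprK.
rewrite -eq !fctE !e1 ln1; lra.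
Qed.

Lemma xlogxE {R : realType} (x : R) : xlogx x = x * ln x.
Proof. by rewrite /xlogx; case: eqP => [->|//]; rewrite mul0r. Qed.

Lemma ln2_lb {R : realType} : 2/3 <= ln (2 : R).
Proof.
have := @lnP1 R (2^-1) ltac:(lra) ltac:(lra).
rewrite lnV ?posrE //.
have -> : (1 - 2^-1 : R) = 2^-1 by field.
rewrite !expr2 !exprS expr0; lra.
Qed.

Lemma ln2_ub {R : realType} : ln (2 : R) <= 3/4.
Proof.
have -> : (2 : R) = (4/3) * (3/2) by field.
rewrite lnM ?posrE; [|lra|lra].
have h1 := @lnP2 R (4/3) ltac:(lra).
have h2 := @lnP2 R (3/2) ltac:(lra).
move: h1 h2; have -> : (4/3 - 1 : R) = 1/3 by field.
have -> : (3/2 - 1 : R) = 1/2 by field.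
rewrite !expr2 !exprS expr0; lra.
Qed.

Lemma ln12_5 {R : realType} : ln (12/5 : R) <= 1.
Proof.
have -> : (12/5 : R) = 2 * (6/5) by field.
rewrite lnM ?posrE; [|lra|lra].
have h2 := @lnP2 R (6/5) ltac:(lra).
move: h2; have -> : (6/5 - 1 : R) = 1/5 by field.
have := @ln2_ub R.
rewrite !expr2 !exprS expr0; lra.
Qed.

Lemma phi_half {R : realType} (t : R) : 0 <= t <= 2^-1 ->
  xlogx t + xlogx (1 - t) + 4 * ln 2 * (t * (1 - t)) <= 0.
Proof.
move=> /andP[t0 th]; rewrite !xlogxE.
have l2lb := @ln2_lb R.
have l2ub := @ln2_ub R.
have [->|tpos] := eqVneq t 0.
  by rewrite subr0 ln1 !mul0r !mulr0 !addr0.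
have t0' : 0 < t by rewrite lt_def tpos t0.
have [tsmall|tbig] := lerP t (3/20).
- have lnq : ln (1 - t) <= - t.
    have := @ln_le_sub1 R (1 - t) ltac:(lra); lra.
  have lnt : ln t + 4 * ln 2 <= 1.
    have e16 : ln (16 * t) = 4 * ln 2 + ln t.
      rewrite lnM ?posrE //.
      have -> : (16 : R) = 2 ^+ 4 by rewrite !exprS expr0; lra.
      by rewrite lnXn // mulr_natl.
    have : ln (16 * t) <= ln (12/5).
      by rewrite ler_ln ?posrE; lra.
    have := @ln12_5 R; lra.
  have h1 : t * (ln t + 4 * ln 2 - 1) <= 0.
    by apply: mulr_ge0_le0; lra.
  have h2 : (1 - t) * (ln (1 - t) + t) <= 0.
    by apply: mulr_ge0_le0; lra.
  have h3 : 0 <= t * t * (4 * ln 2 - 1).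
    by apply: mulr_ge0; [apply: mulr_ge0|]; lra.
  nra.
- have lnA : ln (2 * t) = ln 2 + ln t by rewrite lnM ?posrE //; lra.
  have lnB : ln (2 * (1 - t)) = ln 2 + ln (1 - t) by rewrite lnM ?posrE //; lra.
  have hA := @lnP1 R (2 * t) ltac:(lra) ltac:(lra).
  have hB := @lnP2 R (2 * (1 - t)) ltac:(lra).
  rewrite lnA in hA; rewrite lnB in hB.
  set u := 1 - 2 * t.
  have e1 : 1 - 2 * t = u by [].
  have e2 : 2 * (1 - t) - 1 = u by rewrite /u; ring.
  rewrite e1 e2 in hA hB.
  have h1 : t * (ln 2 + ln t) <= t * (- u - u ^+ 2 / 2 - u ^+ 3 / 3).
    by rewrite ler_wpM2l.
  have h2 : (1 - t) * (ln 2 + ln (1 - t)) <= (1 - t) * (u - u ^+ 2 / 2 + u ^+ 3 / 3).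
    by rewrite ler_wpM2l //; lra.
  have h3 : 2/3 * (u * u) <= ln 2 * (u * u).
    by rewrite ler_wpM2r //; nra.
  have u0 : 0 <= u by rewrite /u; lra.
  have u1 : u <= 7/10 by rewrite /u; lra.
  have h4 : 0 <= (u * u) * (2^-1 - u * u) by apply: mulr_ge0; nra.
  have et : t = (1 - u) / 2 by rewrite /u; field.
  rewrite et in h1 h2 *.
  rewrite !exprS expr0 in h1 h2.
  nra.
Qed.

Lemma phi_le0 {R : realType} (t : R) : 0 <= t <= 1 ->
  xlogx t + xlogx (1 - t) + 4 * ln 2 * (t * (1 - t)) <= 0.
Proof.
move=> /andP[t0 t1].
have [th|th] := lerP t (2^-1); first by apply: phi_half; rewrite t0 th.
have := @phi_half R (1 - t) ltac:(apply/andP; split; lra).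
by rewrite subKr [xlogx (1 - t) + _]addrC [(1 - t) * t]mulrC.
Qed.

Lemma nlog_fin {R : realType} (d : R) : d != 0 -> nlog d = (- ln d)%:E.
Proof. by move=> d0; rewrite /nlog (negbTE d0). Qed.

Lemma wterm_fin {R : realType} (c d : R) : d != 0 -> wterm c d = (c * - ln d)%:E.
Proof.
move=> d0; rewrite /wterm; case: eqP => [->|_]; first by rewrite mul0r.
by rewrite nlog_fin.
Qed.

Lemma wterm0 {R : realType} (d : R) : wterm 0 d = 0%E.
Proof. by rewrite /wterm eqxx. Qed.

Lemma wterm_inf {R : realType} (c : R) : 0 < c -> wterm c 0 = +oo%E.
Proof.
move=> c0; rewrite /wterm gt_eqF // /nlog eqxx.
by rewrite mulr_infty gtr0_sg // mul1e.
Qed.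

Lemma wterm_ge0 {R : realType} (c d : R) : 0 <= c -> 0 <= d <= 1 -> (0 <= wterm c d)%E.
Proof.
move=> c0 /andP[d0 d1]; have [->|dn0] := eqVneq d 0.
  rewrite /wterm; case: eqP => // _; rewrite /nlog eqxx.
  by apply: mule_ge0 => //; rewrite ?lee_fin ?leey.
rewrite wterm_fin // lee_fin; apply: mulr_ge0 => //.
by rewrite oppr_ge0; apply: ln_le0.
Qed.

Lemma wterm_lb {R : realType} (c d a : R) : 0 <= c -> 0 <= d -> 0 < a ->
  ((c * (- ln a - (d - a) / a))%:E <= wterm c d)%E.
Proof.
move=> c0 d0 a0; have [->|cn0] := eqVneq c 0; first by rewrite wterm0 mul0r.
have cp : 0 < c by rewrite lt_def cn0 c0.
have [->|dn0] := eqVneq d 0; first by rewrite wterm_inf // leey.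
have dp : 0 < d by rewrite lt_def dn0 d0.
rewrite wterm_fin // lee_fin ler_wpM2l //.
have := @ln_le_sub1 R (d / a) ltac:(apply: divr_gt0).
rewrite ln_div ?posrE //.
have -> : (d - a) / a = d / a - 1 by field; lra.
lra.
Qed.

Lemma entropy0 {R : realType} : entropy (0 : R) = 0.
Proof. rewrite /entropy !xlogxE subr0 ln1; ring. Qed.

Lemma entropy1 {R : realType} : entropy (1 : R) = 0.
Proof. rewrite /entropy !xlogxE subrr ln1; ring. Qed.

Lemma entropy_half {R : realType} : entropy (2^-1 : R) = ln 2.
Proof.
rewrite /entropy !xlogxE.
have -> : (1 - 2^-1 : R) = 2^-1 by field.
rewrite lnV ?posrE //; by field.
Qed.

Definition rr {R : realType} (d : R * R) (t : R) : R :=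
  - entropy t + t ^+ 2 * - ln d.2 + t * (1 - t) * - ln (1 - d.2)
  + t * (1 - t) * - ln d.1 + (1 - t) ^+ 2 * - ln (1 - d.1).

Lemma risk_fin {R : realType} (d : R * R) (t : R) :
  d.1 != 0 -> 1 - d.1 != 0 -> d.2 != 0 -> 1 - d.2 != 0 -> risk d t = (rr d t)%:E.
Proof. by move=> *; rewrite /risk !wterm_fin. Qed.

Lemma ln4 {R : realType} : ln (4 : R) = 2 * ln 2.
Proof.
have -> : (4 : R) = 2 * 2 by ring.
by rewrite lnM ?posrE // mulr2n mulrDl mul1r.
Qed.

Lemma gibbs {R : realType} (x : R) : 0 < x < 1 ->
  [/\ ln 5 + ln x <= 5 * x - 1,
      ln 5 + ln (1 - x) - 2 * ln 2 <= 5 * (1 - x) / 4 - 1 &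
      (x != 5^-1 -> ln 5 + ln x < 5 * x - 1)].
Proof.
move=> /andP[x0 x1].
have e1 : ln (5 * x) = ln 5 + ln x by rewrite lnM ?posrE.
have e2 : ln (5 * (1 - x) / 4) = ln 5 + ln (1 - x) - 2 * ln 2.
  rewrite lnM ?posrE; [|apply: mulr_gt0; lra|by []].
  rewrite lnM ?posrE; [|by []|lra].
  by rewrite lnV ?posrE // ln4.
split.
- by rewrite -e1; apply: ln_le_sub1; lra.
- by rewrite -e2; apply: ln_le_sub1; apply: divr_gt0 => //; apply: mulr_gt0; lra.
- move=> xn; rewrite -e1; apply: ln_lt_sub1; first lra.
  apply/eqP => h; move/eqP: xn; apply.
  have -> : x = (5 * x) / 5 by field.
  by rewrite h mul1r.
Qed.

Definition ds {R : realType} : R * R := (5^-1, 4/5).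

Lemma rr_ds {R : realType} (t : R) :
  rr ds t = (ln 5 - 2 * ln 2) + (- entropy t + 4 * ln 2 * (t * (1 - t))).
Proof.
rewrite /rr /ds /=.
have -> : (1 - 4/5 : R) = 5^-1 by field.
have -> : (1 - 5^-1 : R) = 4/5 by field.
have -> : ln (4/5 : R) = 2 * ln 2 - ln 5.
  by rewrite lnM ?posrE // lnV ?posrE // ln4.
rewrite lnV ?posrE //.
ring.
Qed.

Lemma risk_ds {R : realType} (t : R) : risk ds t = (rr ds t)%:E.
Proof.
apply: risk_fin; rewrite /ds /=; apply/eqP; lra.
Qed.

Lemma ds_dec {R : realType} : decisions (@ds R).
Proof. rewrite /decisions /ds /=; split; apply/andP; split; lra. Qed.

Lemma max_ds {R : realType} : (max_risk (@ds R) <= (ln 5 - 2 * ln 2)%:E)%E.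
Proof.
rewrite /max_risk; apply: ge_ereal_sup => _ [t tD <-].
move: tD; rewrite /= in_itv /= => /andP[t0 t1].
rewrite risk_ds rr_ds lee_fin.
have := @phi_le0 R t ltac:(by rewrite t0 t1).
rewrite /entropy; lra.
Qed.

Lemma risk_le_max {R : realType} (d : R * R) (t : R) : 0 <= t <= 1 ->
  (risk d t <= max_risk d)%E.
Proof.
move=> tI; apply: ereal_sup_ubound; exists t => //.
Qed.

Lemma sum5_inf {R : realType} (x : R) (a b c e : \bar R) :
  (0 <= a)%E -> (0 <= b)%E -> (0 <= c)%E -> (0 <= e)%E ->
  (a = +oo \/ b = +oo \/ c = +oo \/ e = +oo)%E ->
  (x%:E + a + b + c + e = +oo)%E.
Proof.
case: a => [a||] a0 //; case: b => [b||] b0 //; case: c => [c||] c0 //;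
  case: e => [e||] e0 // H //.
by case: H => [//|[//|[//|//]]].
Qed.

Lemma risk_half_inf {R : realType} (a b : R) : decisions (a, b) ->
  ~~ ((0 < a < 1) && (0 < b < 1)) -> risk (a, b) (2^-1) = +oo%E.
Proof.
rewrite /decisions /= => -[/andP[a0 a1] /andP[b0 b1]] H.
rewrite /risk /=.
have c1 : (0 : R) < 2^-1 ^+ 2 by apply: exprn_gt0.
have c2 : (0 : R) < 2^-1 * (1 - 2^-1) by apply: mulr_gt0; lra.
have c3 : (0 : R) < (1 - 2^-1) ^+ 2 by apply: exprn_gt0; lra.
apply: sum5_inf; try (apply: wterm_ge0; [lra| apply/andP; split; lra]).
have [->|an0] := eqVneq a 0; first by right; right; left; rewrite wterm_inf.
have [ea|an1] := eqVneq a 1.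
  by right; right; right; rewrite ea subrr wterm_inf.
have [->|bn0] := eqVneq b 0; first by left; rewrite wterm_inf.
have [eb|bn1] := eqVneq b 1.
  by right; left; rewrite eb subrr wterm_inf.
exfalso; move/negP: H; apply.
apply/andP; split; apply/andP; split.
- by rewrite lt_def an0 a0.
- by rewrite lt_def eq_sym an1 a1.
- by rewrite lt_def bn0 b0.
- by rewrite lt_def eq_sym bn1 b1.
Qed.

Lemma lb_main {R : realType} (a b : R) : decisions (a, b) ->
  ((ln 5 - 2 * ln 2)%:E <= max_risk (a, b))%E /\
  ((max_risk (a, b) <= (ln 5 - 2 * ln 2)%:E)%E -> (a, b) = ds).
Proof.
move=> dec.
have [int|bnd] := boolP ((0 < a < 1) && (0 < b < 1)); last first.
  have hinf : max_risk (a, b) = +oo%E.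
    apply/eqP; rewrite eq_le leey /= -(@risk_half_inf R a b dec bnd).
    by apply: risk_le_max; apply/andP; split; lra.
  by rewrite hinf leey; split.
move: int => /andP[/andP[a0 a1] /andP[b0 b1]].
have hr t : risk (a, b) t = (rr (a, b) t)%:E.
  by apply: risk_fin; rewrite /=; apply/eqP; lra.
have h0 := @risk_le_max R (a, b) 0 ltac:(apply/andP; split; lra).
have h1 := @risk_le_max R (a, b) 1 ltac:(apply/andP; split; lra).
have hh := @risk_le_max R (a, b) (2^-1) ltac:(apply/andP; split; lra).
rewrite !hr in h0 h1 hh.
have e0 : rr (a, b) 0 = - ln (1 - a) by rewrite /rr /= entropy0; ring.
have e1 : rr (a, b) 1 = - ln b by rewrite /rr /= entropy1; ring.
have eh : rr (a, b) (2^-1) =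
    - ln 2 + 4^-1 * (- ln b - ln (1 - b) - ln a - ln (1 - a)).
  by rewrite /rr /= entropy_half; field.
rewrite e0 e1 eh in h0 h1 hh.
have [gA1 gA2 gA3] := @gibbs R a ltac:(apply/andP; split; lra).
have [gB1 gB2 gB3] := @gibbs R (1 - b) ltac:(apply/andP; split; lra).
rewrite (_ : 1 - (1 - b) = b) in gB2; last by ring.
split.
- move: h0 h1 hh; case: (max_risk (a, b)) => [M| |].
  + by rewrite !lee_fin => *; lra.
  + by move=> *; rewrite leey.
  + by rewrite leeNy_eq.
- move: h0 h1 hh; case: (max_risk (a, b)) => [M| |].
  + rewrite !lee_fin => h0 h1 hh hM.
    have ea : a = 5^-1.
      apply/eqP; apply/negPn/negP => an; have := gA3 an; lra.
    have eb : 1 - b = 5^-1.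
      apply/eqP; apply/negPn/negP => bn; have := gB3 bn; lra.
    rewrite /ds ea; congr pair; lra.
  + by [].
  + by rewrite leeNy_eq.
Qed.

Lemma le_integral_any {R : realType} (mu : {measure set R -> \bar R}) (D : set R)
  (f g : R -> \bar R) : (forall x, D x -> (f x <= g x)%E) ->
  (\int[mu]_(x in D) f x <= \int[mu]_(x in D) g x)%E.
Proof.
move=> fg; rewrite /integral; apply: leeB; apply: ereal_sup_le.
- move=> _ [h hle <-]; exists h => // x; apply: le_trans (hle x) _.
  apply: (@funepos_le _ _ setT) => //; last by rewrite in_setT.
  move=> y _; rewrite /patch; case: ifP => // /set_mem Dy; exact: fg.
- move=> _ [h hle <-]; exists h => // x; apply: le_trans (hle x) _.
  apply: (@funeneg_le _ _ setT) => //; last by rewrite in_setT.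
  move=> y _; rewrite /patch; case: ifP => // /set_mem Dy; exact: fg.
Qed.

Lemma bounded_of {R : realType} (f : R -> R) (A : set R) (M : R) :
  (forall x, A x -> `|f x| <= M) -> [bounded f x | x in A].
Proof.
move=> h; exists M; split; first exact: num_real.
move=> N MN x Ax /=; apply: le_trans (h x Ax) _; exact: ltW.
Qed.

Lemma int_bdd {R : realType} (P : probability R R) (f : R -> R) (M : R) :
  measurable_fun setT f -> (forall x, 0 <= x <= 1 -> `|f x| <= M) ->
  P.-integrable `[0%R, 1%R] (EFin \o f).
Proof.
move=> mf hM; apply: measurable_bounded_integrable.
- exact: measurable_itv.
- apply: (le_lt_trans (probability_le1 _ _)); first exact: measurable_itv.
  by rewrite ltry.
- apply: measurable_funS mf => //.
- apply: (@bounded_of R f _ M) => x /=; rewrite in_itv /=; exact: hM.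
Qed.

Lemma intD_R {R : realType} (mu : {measure set R -> \bar R}) (D : set R)
  (mD : measurable D) {f g : R -> R} :
  mu.-integrable D (EFin \o f) -> mu.-integrable D (EFin \o g) ->
  (\int[mu]_(x in D) (f x + g x)%:E =
   \int[mu]_(x in D) (f x)%:E + \int[mu]_(x in D) (g x)%:E)%E.
Proof. move=> hf hg; exact: (integralD mD hf hg). Qed.

Lemma intZ_R {R : realType} (mu : {measure set R -> \bar R}) (D : set R)
  (mD : measurable D) (k : R) {f : R -> R} :
  mu.-integrable D (EFin \o f) ->
  (\int[mu]_(x in D) (k * f x)%:E = k%:E * \int[mu]_(x in D) (f x)%:E)%E.
Proof. move=> hf; exact: (integralZl mD hf). Qed.

Lemma int_cst_R {R : realType} (mu : {measure set R -> \bar R}) (D : set R)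
  (mD : measurable D) (k : R) :
  (\int[mu]_(x in D) k%:E = k%:E * mu D)%E.
Proof. by have := (@integral_cst _ _ _ mu D mD k%:E); apply. Qed.

Lemma meas_xlogx {R : realType} : measurable_fun setT (@xlogx R).
Proof.
have -> : @xlogx R = (fun x => x * ln x) by apply/funext => x; rewrite xlogxE.
apply: measurable_funM; [exact: measurable_id | exact: measurable_ln].
Qed.

Lemma meas_entropy {R : realType} : measurable_fun setT (@entropy R).
Proof.
rewrite /entropy; apply: measurable_funB.
  by apply: measurable_funN; exact: meas_xlogx.
apply: measurableT_comp; first exact: meas_xlogx.
apply: measurable_funB; [exact: measurable_cst | exact: measurable_id].
Qed.

Lemma poly_bdd {R : realType} (a b c t : R) : 0 <= t <= 1 ->
  `|a * t ^+ 2 + b * t + c| <= `|a| + `|b| + `|c|.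
Proof.
move=> /andP[t0 t1].
rewrite (le_trans (ler_normD _ _)) // lerD //.
rewrite (le_trans (ler_normD _ _)) // lerD //.
- rewrite normrM -[leRHS]mulr1 ler_wpM2l // ger0_norm ?exprn_ge0 //.
  by rewrite expr2; nra.
- rewrite normrM -[leRHS]mulr1 ler_wpM2l // ger0_norm //.
Qed.

Lemma meas_poly {R : realType} (a b c : R) :
  measurable_fun setT (fun t : R => a * t ^+ 2 + b * t + c).
Proof.
apply: measurable_funD; last exact: measurable_cst.
apply: measurable_funD.
  apply: measurable_funM; first exact: measurable_cst.
  by apply: measurable_funX; exact: measurable_id.
apply: measurable_funM; first exact: measurable_cst.
exact: measurable_id.
Qed.

Lemma int_poly {R : realType} (P : probability R R) (a b c : R) :
  P.-integrable `[0%R, 1%R] (EFin \o (fun t : R => a * t ^+ 2 + b * t + c)).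
Proof.
apply: (@int_bdd R P _ (`|a| + `|b| + `|c|)); first exact: meas_poly.
exact: poly_bdd.
Qed.

Lemma xlogx_bdd {R : realType} (x : R) : 0 <= x <= 1 -> `|xlogx x| <= 1.
Proof.
move=> /andP[x0 x1]; rewrite xlogxE.
have [->|xn0] := eqVneq x 0; first by rewrite mul0r normr0.
have xp : 0 < x by rewrite lt_def xn0 x0.
have h1 : ln x <= 0 by apply: ln_le0.
have h2 : ln (x^-1) <= x^-1 - 1 by apply: ln_le_sub1; rewrite invr_gt0.
rewrite lnV ?posrE // in h2.
have h3 : x * (x^-1 - 1) = 1 - x by field; lra.
rewrite ler_norml; apply/andP; split; last by nra.
have : x * - ln x <= x * (x^-1 - 1) by rewrite ler_wpM2l.
lra.
Qed.

Lemma int_ent {R : realType} (P : probability R R) :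
  P.-integrable `[0%R, 1%R] (EFin \o (fun t : R => - entropy t)).
Proof.
apply: (@int_bdd R P _ 2).
  by apply: measurable_funN; exact: meas_entropy.
move=> x /andP[x0 x1]; rewrite normrN /entropy.
have h1 := @xlogx_bdd R x ltac:(apply/andP; split; lra).
have h2 := @xlogx_bdd R (1 - x) ltac:(apply/andP; split; lra).
rewrite (le_trans (ler_normB _ _)) // normrN.
lra.
Qed.

Lemma int_quad {R : realType} (P : probability R R) (hP : prior P) (f : R -> R)
  (a b c : R) : P.-integrable `[0%R, 1%R] (EFin \o f) ->
  (\int[P]_(t in `[0%R, 1%R]) (f t + (a * t ^+ 2 + b * t + c))%:E =
   \int[P]_(t in `[0%R, 1%R]) (f t)%:E
   + a%:E * \int[P]_(t in `[0%R, 1%R]) (t ^+ 2)%:E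
   + b%:E * \int[P]_(t in `[0%R, 1%R]) t%:E + c%:E)%E.
Proof.
move=> hf.
have mD : measurable (`[0%R, 1%R] : set R) by exact: measurable_itv.
rewrite (intD_R P _ mD hf (int_poly P a b c)).
have iab : P.-integrable `[0%R, 1%R] (EFin \o (fun t : R => a * t ^+ 2 + b * t)).
  move: (int_poly P a b 0); apply: (eq_integrable mD) => t _ /=.
  by rewrite addr0.
have ic : P.-integrable `[0%R, 1%R] (EFin \o (fun t : R => c)).
  move: (int_poly P 0 0 c); apply: (eq_integrable mD) => t _ /=.
  by rewrite !mul0r !add0r.
have ia : P.-integrable `[0%R, 1%R] (EFin \o (fun t : R => t ^+ 2)).
  move: (int_poly P 1 0 0); apply: (eq_integrable mD) => t _ /=.
  by rewrite mul1r mul0r !addr0.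
have ib : P.-integrable `[0%R, 1%R] (EFin \o (fun t : R => t)).
  move: (int_poly P 0 1 0); apply: (eq_integrable mD) => t _ /=.
  by rewrite mul1r mul0r add0r addr0.
have iaa : P.-integrable `[0%R, 1%R] (EFin \o (fun t : R => a * t ^+ 2)).
  move: (int_poly P a 0 0); apply: (eq_integrable mD) => t _ /=.
  by rewrite mul0r !addr0.
have ibb : P.-integrable `[0%R, 1%R] (EFin \o (fun t : R => b * t)).
  move: (int_poly P 0 b 0); apply: (eq_integrable mD) => t _ /=.
  by rewrite mul0r add0r addr0.
rewrite (intD_R P _ mD iab ic) (intD_R P _ mD iaa ibb).
rewrite (intZ_R P _ mD a ia) (intZ_R P _ mD b ib) (int_cst_R P _ mD c).
have hP1 : P `[0%R, 1%R]%classic = 1%E := hP.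
rewrite -[in RHS](mule1 c%:E) -hP1.
by rewrite !addeA.
Qed.

Lemma int_zero {R : realType} (P : probability R R) :
  P.-integrable `[0%R, 1%R] (EFin \o (fun _ : R => (0 : R))).
Proof.
apply: (@int_bdd R P _ 0); first exact: measurable_cst.
by move=> *; rewrite normr0.
Qed.

Lemma quad_ge0 {R : realType} (P : probability R R) (hP : prior P) (a b c : R) :
  (forall t, 0 <= t <= 1 -> 0 <= a * t ^+ 2 + b * t + c) ->
  (0 <= a%:E * \int[P]_(t in `[0%R, 1%R]) (t ^+ 2)%:E
        + b%:E * \int[P]_(t in `[0%R, 1%R]) t%:E + c%:E)%E.
Proof.
move=> h.
have mD : measurable (`[0%R, 1%R] : set R) by exact: measurable_itv.
have e := @int_quad R P hP (fun _ => 0) a b c (int_zero P).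
have z : (\int[P]_(t in `[0%R, 1%R]) (0 : R)%:E = 0)%E.
  by rewrite (int_cst_R P _ mD 0) mul0e.
rewrite z add0e in e; rewrite -e.
apply: integral_ge0 => t /=; rewrite in_itv /= => tI.
by rewrite lee_fin add0r; exact: h.
Qed.

Lemma fin_m1 {R : realType} (P : probability R R) :
  (\int[P]_(t in `[0%R, 1%R]) t%:E)%E \is a fin_num.
Proof.
have mD : measurable (`[0%R, 1%R] : set R) by exact: measurable_itv.
apply: (integrable_fin_num mD).
move: (int_poly P 0 1 0); apply: (eq_integrable mD) => t _ /=.
by rewrite mul0r add0r mul1r addr0.
Qed.

Lemma fin_m2 {R : realType} (P : probability R R) :
  (\int[P]_(t in `[0%R, 1%R]) (t ^+ 2)%:E)%E \is a fin_num.
Proof.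
have mD : measurable (`[0%R, 1%R] : set R) by exact: measurable_itv.
apply: (integrable_fin_num mD).
move: (int_poly P 1 0 0); apply: (eq_integrable mD) => t _ /=.
by rewrite mul1r mul0r !addr0.
Qed.

Lemma fin_ent {R : realType} (P : probability R R) :
  (\int[P]_(t in `[0%R, 1%R]) (- entropy t)%:E)%E \is a fin_num.
Proof.
have mD : measurable (`[0%R, 1%R] : set R) by exact: measurable_itv.
exact: (integrable_fin_num mD (int_ent P)).
Qed.

Definition cA {R : realType} (a b : R) := - ln b + ln (1 - b) + ln a - ln (1 - a).
Definition cB {R : realType} (a b : R) := - ln (1 - b) - ln a + 2 * ln (1 - a).
Definition cC {R : realType} (a : R) := - ln (1 - a).

Lemma bayes_int {R : realType} (P : probability R R) (hP : prior P) (a b : R) :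
  0 < a < 1 -> 0 < b < 1 ->
  bayes_risk P (a, b) =
  (\int[P]_(t in `[0%R, 1%R]) (- entropy t)%:E
   + (cA a b)%:E * \int[P]_(t in `[0%R, 1%R]) (t ^+ 2)%:E
   + (cB a b)%:E * \int[P]_(t in `[0%R, 1%R]) t%:E + (cC a)%:E)%E.
Proof.
move=> /andP[a0 a1] /andP[b0 b1].
rewrite /bayes_risk -(@int_quad R P hP (fun t => - entropy t) _ _ _ (int_ent P)).
apply: eq_integral => t _.
rewrite risk_fin /=; [|apply/eqP; lra..].
by congr EFin; rewrite /rr /cA /cB /cC /=; ring.
Qed.

Lemma fo {R : realType} (p q x0 : R) : 0 <= p -> 0 <= q -> p <= 1 -> q <= 1 ->
  1/5 <= x0 <= 4/5 ->
  (forall x, 0 < x < 1 -> 0 <= p * (ln x0 - ln x) + q * (ln (1 - x0) - ln (1 - x))) ->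
  x0 * (p + q) = p.
Proof.
move=> p0 q0 p1 q1 /andP[x01 x02] h.
set c := x0 * (p + q) - p.
have cb1 : -1 <= c by rewrite /c; nra.
have cb2 : c <= 2 by rewrite /c; nra.
set x := x0 - c / 20.
have x0' : 0 < x by rewrite /x; lra.
have x1' : x < 1 by rewrite /x; lra.
have hx := h x ltac:(apply/andP; split; lra).
have l1 : ln x0 - ln x <= x0 / x - 1.
  rewrite -ln_div ?posrE; [|lra|lra].
  by apply: ln_le_sub1; apply: divr_gt0; lra.
have l2 : ln (1 - x0) - ln (1 - x) <= (1 - x0) / (1 - x) - 1.
  rewrite -ln_div ?posrE; [|lra|lra].
  by apply: ln_le_sub1; apply: divr_gt0; lra.
have hx2 : 0 <= p * (x0 / x - 1) + q * ((1 - x0) / (1 - x) - 1).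
  apply: (le_trans hx); apply: lerD; apply: ler_wpM2l => //.
have hx3 : 0 <= (p * (x0 / x - 1) + q * ((1 - x0) / (1 - x) - 1)) * (x * (1 - x)).
  by apply: mulr_ge0 => //; apply: mulr_ge0; lra.
have ee : (p * (x0 / x - 1) + q * ((1 - x0) / (1 - x) - 1)) * (x * (1 - x))
          = (x - x0) * ((p + q) * x - p).
  by field; apply/andP; split; apply/eqP; lra.
rewrite ee in hx3.
have ex : x - x0 = - (c / 20) by rewrite /x; ring.
have ex2 : (p + q) * x - p = c - (p + q) * c / 20 by rewrite /x /c; ring.
rewrite ex ex2 in hx3.
have cc : c = 0 by nra.
by move: cc; rewrite /c; lra.
Qed.

Lemma minimax_ds {R : realType} : minimax (@ds R).
Proof.
split; first exact: ds_dec.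
move=> [a b] dec; apply: le_trans (@max_ds R) _; exact: (@lb_main R a b dec).1.
Qed.

Lemma minimax_uniq {R : realType} (d : R * R) : minimax d -> d = ds.
Proof.
case: d => a b [dec h]; apply: (@lb_main R a b dec).2.
exact: le_trans (h _ ds_dec) (@max_ds R).
Qed.

Definition k1 {R : realType} (b : R) := - ln (4/5) - (b - 4/5) / (4/5).
Definition k2 {R : realType} (b : R) := - ln (1 - 4/5) - ((1 - b) - (1 - 4/5)) / (1 - 4/5).
Definition k3 {R : realType} (a : R) := - ln (5^-1) - (a - 5^-1) / 5^-1.
Definition k4 {R : realType} (a : R) := - ln (1 - 5^-1) - ((1 - a) - (1 - 5^-1)) / (1 - 5^-1).

Lemma risk_lb {R : realType} (a b t : R) : decisions (a, b) -> 0 <= t <= 1 ->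
  ((- entropy t + ((k1 b - k2 b - k3 a + k4 a) * t ^+ 2
      + (k2 b + k3 a - 2 * k4 a) * t + k4 a))%:E <= risk (a, b) t)%E.
Proof.
rewrite /decisions /= => -[/andP[a0 a1] /andP[b0 b1]] /andP[t0 t1].
rewrite /risk /=.
have h1 := @wterm_lb R (t ^+ 2) b (4/5) ltac:(apply: exprn_ge0; lra) b0 ltac:(lra).
have h2 := @wterm_lb R (t * (1 - t)) (1 - b) (1 - 4/5)
  ltac:(apply: mulr_ge0; lra) ltac:(lra) ltac:(lra).
have h3 := @wterm_lb R (t * (1 - t)) a (5^-1)
  ltac:(apply: mulr_ge0; lra) a0 ltac:(lra).
have h4 := @wterm_lb R ((1 - t) ^+ 2) (1 - a) (1 - 5^-1)
  ltac:(apply: exprn_ge0; lra) ltac:(lra) ltac:(lra).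
have := leeD (leeD (leeD (leeD (lexx (- entropy t)%:E) h1) h2) h3) h4.
apply: le_trans.
rewrite -!EFinD lee_fin /k1 /k2 /k3 /k4.
rewrite le_eqVlt; apply/orP; left; apply/eqP.
by field.
Qed.

Theorem corollary1 (R : realType) (P : probability R R) (hP : prior P) :
  minimax_prior P <->
  ((\int[P]_(t in `[0%R, 1%R]) t%:E)%E = (1 / 2 : R)%:E /\
   (\int[P]_(t in `[0%R, 1%R]) (t ^+ 2)%:E)%E = (2 / 5 : R)%:E).
Proof.
have eM1 := fineK (fin_m1 P).
have eM2 := fineK (fin_m2 P).
have eIE := fineK (fin_ent P).
set M1 := fine _ in eM1.
set M2 := fine _ in eM2.
set IE := fine _ in eIE.
have q := @quad_ge0 R P hP.
have Q a b c : (forall t : R, 0 <= t <= 1 -> 0 <= a * t ^+ 2 + b * t + c) ->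
    0 <= a * M2 + b * M1 + c.
  by move=> h; have := q a b c h; rewrite -eM1 -eM2 -!EFinM -!EFinD lee_fin.
have hM2 : 0 <= M2.
  have := Q 1 0 0 ltac:(by move=> t /andP[t0 t1]; rewrite expr2; nra); lra.
have hM12 : M2 <= M1.
  have := Q (-1) 1 0 ltac:(by move=> t /andP[t0 t1]; rewrite expr2; nra); lra.
have hM1 : M1 <= 1.
  have := Q 0 (-1) 1 ltac:(by move=> t /andP[t0 t1]; rewrite expr2; nra); lra.
have hq : 0 <= 1 - 2 * M1 + M2.
  have := Q 1 (-2) 1 ltac:(by move=> t /andP[t0 t1]; rewrite expr2; nra); lra.
have h5 : 0 < (5^-1 : R) < 1 by apply/andP; split; lra.
have h45 : 0 < (4/5 : R) < 1 by apply/andP; split; lra.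
split.
- move=> [d [[_ dbayes] dmm]].
  have dE := minimax_uniq _ dmm; rewrite dE in dbayes.
  have hb : forall b, 0 < b < 1 ->
      0 <= M2 * (ln (4/5) - ln b) + (M1 - M2) * (ln (1 - 4/5) - ln (1 - b)).
    move=> b hb.
    have dec : decisions ((5^-1 : R), b).
      by move: hb => /andP[b0 b1]; rewrite /decisions /=; split; apply/andP; split; lra.
    have := dbayes _ dec.
    rewrite /ds (@bayes_int R P hP 5^-1 (4/5) h5 h45) (@bayes_int R P hP 5^-1 b h5 hb).
    rewrite -eM1 -eM2 -eIE -!EFinM -!EFinD lee_fin /cA /cB /cC; lra.
  have ha : forall a, 0 < a < 1 ->
      0 <= (M1 - M2) * (ln 5^-1 - ln a) + (1 - 2 * M1 + M2) * (ln (1 - 5^-1) - ln (1 - a)).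
    move=> a ha.
    have dec : decisions (a, (4/5 : R)).
      by move: ha => /andP[a0 a1]; rewrite /decisions /=; split; apply/andP; split; lra.
    have := dbayes _ dec.
    rewrite /ds (@bayes_int R P hP 5^-1 (4/5) h5 h45) (@bayes_int R P hP a (4/5) ha h45).
    rewrite -eM1 -eM2 -eIE -!EFinM -!EFinD lee_fin /cA /cB /cC; lra.
  have e1 := @fo R M2 (M1 - M2) (4/5) hM2 ltac:(lra) ltac:(lra) ltac:(lra)
    ltac:(apply/andP; split; lra) hb.
  have e2 := @fo R (M1 - M2) (1 - 2 * M1 + M2) 5^-1 ltac:(lra) hq ltac:(lra) ltac:(lra)
    ltac:(apply/andP; split; lra) ha.
  have m1v : M1 = 1/2 by lra.
  have m2v : M2 = 2/5 by lra.
  by split; [rewrite -eM1 m1v | rewrite -eM2 m2v].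
- move=> [h1 h2].
  have m1v : M1 = 1/2 by rewrite -eM1 in h1; case: h1.
  have m2v : M2 = 2/5 by rewrite -eM2 in h2; case: h2.
  exists ds; split; last exact: minimax_ds.
  split; first exact: ds_dec.
  move=> [a b] dec.
  have lb := @le_integral_any R P `[0%R, 1%R]%classic _ _ (fun t ht => @risk_lb R a b t dec ht).
  apply: le_trans _ lb.
  rewrite (@int_quad R P hP (fun t => - entropy t) _ _ _ (int_ent P)).
  rewrite /ds (@bayes_int R P hP 5^-1 (4/5) h5 h45).
  rewrite -eM1 -eM2 -eIE -!EFinM -!EFinD lee_fin /cA /cB /cC /k1 /k2 /k3 /k4 m1v m2v.
  rewrite le_eqVlt; apply/orP; left; apply/eqP.
  by field.
Qed.
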